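(* Let $c_2,c_3,c_4,c_6,v$ be independent indeterminates and set $\mu(v)=(\mu_1,\mu_2,\mu_3,\mu_4,\mu_6)=(0,\;3v+c_2,\;c_3,\;3v^2+2c_2v+c_4,\;v^3+c_2v^2+c_4v+c_6)$. Let $S(t,v)=s(t;\mu(v))$. Then \[ \frac{\partial S}{\partial v}=S\,\frac{\partial S}{\partial t}, \] and $S(t,0)=s_0(t)$, where $s_0(t)$ is the power series with $s_0(0)=0$ defined by $s_0=t^3+c_2t^2s_0+c_3s_0^2+c_4ts_0^2+c_6s_0^3$.
   Context: For parameters $\mu=(\mu_1,\mu_2,\mu_3,\mu_4,\mu_6)$, $s(t;\mu)$ denotes the unique formal power series in $t$ with $s(0;\mu)=0$ satisfying $s=t^3+\mu_1ts+\mu_2t^2s+\mu_3s^2+\mu_4ts^2+\mu_6s^3$ (the equation of the cubic $y^2+\mu_1xy+\mu_3y=x^3+\mu_2x^2+\mu_4x+\mu_6$ in Tate coordinates $t=-x/y$, $s=-1/y$). *)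

(* Defs.v *)
From HB Require Import structures.
From mathcomp Require Import all_boot all_order all_algebra.
From mathcomp Require Export mpoly.
Set Implicit Arguments. Unset Strict Implicit. Unset Printing Implicit Defensive.
Import Order.TTheory GRing.Theory Num.Theory.
Local Open Scope ring_scope.

Section FPS.
Variable A : comRingType.

(* formal power series sum_n f n t^n *)
Definition fps := nat -> A.
Definition fadd (f g : fps) : fps := fun n => f n + g n.
Definition fmul (f g : fps) : fps := fun n => \sum_(i < n.+1) f i * g (n - i)%N.
Definition fscale (a : A) (f : fps) : fps := fun n => a * f n.
Definition fT : fps := fun n => (n == 1%N)%:R.
Definition fderiv (f : fps) : fps := fun n => f n.+1 *+ n.+1.

Definition is_tate_s (mu1 mu2 mu3 mu4 mu6 : A) (s : fps) : Prop :=
  s 0%N = 0 /\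
  s = fadd (fmul fT (fmul fT fT))
      (fadd (fscale mu1 (fmul fT s))
      (fadd (fscale mu2 (fmul (fmul fT fT) s))
      (fadd (fscale mu3 (fmul s s))
      (fadd (fscale mu4 (fmul fT (fmul s s)))
            (fscale mu6 (fmul s (fmul s s))))))).
End FPS.

(* Coefficient ring: Z[c2,c3,c4,c6] = {mpoly int[4]} with c2 = 'X_0, c3 = 'X_1,
   c4 = 'X_2, c6 = 'X_3; the indeterminate v is the polynomial variable of
   {poly {mpoly int[4]}}. *)
Definition Cring := {mpoly int[4]}.
Definition c2 : Cring := 'X_(0 : 'I_4).
Definition c3 : Cring := 'X_(1 : 'I_4).
Definition c4 : Cring := 'X_(2 : 'I_4).
Definition c6 : Cring := 'X_(3 : 'I_4).
Definition Vring := {poly Cring}.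
Definition v : Vring := 'X.

Definition mu1v : Vring := 0.
Definition mu2v : Vring := 3%:R * v + c2%:P.
Definition mu3v : Vring := c3%:P.
Definition mu4v : Vring := 3%:R * v ^+ 2 + 2%:R * c2%:P * v + c4%:P.
Definition mu6v : Vring := v ^+ 3 + c2%:P * v ^+ 2 + c4%:P * v + c6%:P.

Definition dv (S : fps Vring) : fps Vring := fun n => (S n)^`().
Definition at_v0 (S : fps Vring) : fps Cring := fun n => (S n).[0].

(* Main.v *)
Require Import Defs.
From HB Require Import structures.
From mathcomp Require Import all_boot all_order all_algebra.
From Stdlib Require Import FunctionalExtensionality Ring.
Ltac sring := ring.
From mathcomp Require Import ring.
Set Implicit Arguments. Unset Strict Implicit. Unset Printing Implicit Defensive.
Import GRing.Theory.
Local Open Scope ring_scope.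


Section FPSTh.
Variable A : comRingType.
Implicit Types f g h : fps A.
Definition fzero : fps A := fun _ => 0.
Definition cst (a : A) : fps A := fun n => if n is 0%N then a else 0.
Definition fone : fps A := cst 1.
Definition fopp f : fps A := fun n => - f n.
Definition fsub f g : fps A := fadd f (fopp g).
Definition Pt (N : nat) f : {poly A} := \poly_(i < N) f i.

Lemma fmulP N f g n : (n < N)%N -> fmul f g n = (Pt N f * Pt N g)`_n.
Proof.
move=> nN; rewrite coefM /fmul; apply: eq_bigr => i _.
rewrite !coef_poly (leq_ltn_trans (leq_ord i) nN) (leq_ltn_trans (leq_subr i n) nN) //.
Qed.

Lemma coefM_eq (p q r : {poly A}) n :
  (forall i, (i <= n)%N -> p`_i = q`_i) -> (p * r)`_n = (q * r)`_n.
Proof. by move=> H; rewrite !coefM; apply: eq_bigr => i _; rewrite H // -ltnS. Qed.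

Lemma PtE N f i : (i < N)%N -> (Pt N f)`_i = f i.
Proof. by move=> h; rewrite coef_poly h. Qed.

Lemma fmulC f g : fmul f g = fmul g f.
Proof. apply: functional_extensionality => n; rewrite !(fmulP (N:=n.+1)) //. by rewrite mulrC. Qed.

Lemma fmulA f g h : fmul f (fmul g h) = fmul (fmul f g) h.
Proof.
apply: functional_extensionality => n.
rewrite [LHS](fmulP (N:=n.+1)) // [RHS](fmulP (N:=n.+1)) //.
rewrite [RHS](@coefM_eq _ (Pt n.+1 f * Pt n.+1 g)); last first.
  by move=> i hi; rewrite PtE // -fmulP.
rewrite [Pt _ f * _]mulrC [LHS](@coefM_eq _ (Pt n.+1 g * Pt n.+1 h)); last first.
  by move=> i hi; rewrite PtE // -fmulP.
by rewrite mulrC mulrA.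
Qed.

Lemma fmul0n f g : fmul f g 0 = f 0%N * g 0%N.
Proof. by rewrite /fmul big_ord1. Qed.

Lemma fmul_cst a f : fmul (cst a) f = fscale a f.
Proof.
apply: functional_extensionality => n; rewrite /fmul big_ord_recl /= subn0 big1 ?addr0 //.
by move=> i _; rewrite mul0r.
Qed.

Lemma fmulDl f g h : fmul (fadd f g) h = fadd (fmul f h) (fmul g h).
Proof.
apply: functional_extensionality => n; rewrite /fmul /fadd -big_split /=.
by apply: eq_bigr => i _; rewrite mulrDl.
Qed.

Lemma fps_rt : ring_theory fzero fone (@fadd A) (@fmul A) fsub fopp (@eq (fps A)).
Proof.
split.
- by move=> x; apply: functional_extensionality => n; rewrite /fadd add0r.
- by move=> x y; apply: functional_extensionality => n; rewrite /fadd addrC.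
- by move=> x y z; apply: functional_extensionality => n; rewrite /fadd addrA.
- by move=> x; rewrite /fone fmul_cst; apply: functional_extensionality => n; rewrite /fscale mul1r.
- exact: fmulC.
- exact: fmulA.
- exact: fmulDl.
- by [].
- by move=> x; apply: functional_extensionality => n; rewrite /fadd /fopp subrr.
Qed.

Lemma fderivD f g : fderiv (fadd f g) = fadd (fderiv f) (fderiv g).
Proof. by apply: functional_extensionality => n; rewrite /fderiv /fadd mulrnDl. Qed.

Lemma fderivM f g : fderiv (fmul f g) = fadd (fmul (fderiv f) g) (fmul f (fderiv g)).
Proof.
apply: functional_extensionality => n.
rewrite /fderiv /fadd (fmulP (N:=n.+2)) // -coef_deriv derivM coefD.
rewrite !(fmulP (N:=n.+2)) //; congr (_ + _).
  apply: coefM_eq => i hi; rewrite coef_deriv !PtE //; apply: (leq_ltn_trans hi); by [].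
rewrite ![Pt _ f * _]mulrC; apply: coefM_eq => i hi; rewrite coef_deriv !PtE //.
by apply: (leq_ltn_trans hi).
Qed.

Lemma fderivS a f : fderiv (fscale a f) = fscale a (fderiv f).
Proof. by apply: functional_extensionality => n; rewrite /fderiv /fscale mulrnAr. Qed.

Lemma fderivT : fderiv (fT A) = fone.
Proof.
apply: functional_extensionality => n; rewrite /fderiv /fT /fone /cst.
by case: n => [|n] /=; rewrite ?mul0rn.
Qed.

Lemma unit_cancel f g : fmul f g = fzero -> g 0%N = 1 -> f = fzero.
Proof.
move=> H g0; apply: functional_extensionality => n; elim/ltn_ind: n => n IH.
have := congr1 (fun F => F n) H; rewrite /fmul /fzero big_ord_recr /= subnn g0 mulr1.
by rewrite big1 ?add0r // => i _; rewrite IH ?mul0r.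
Qed.

End FPSTh.


Section Uniq.
Variable A : comRingType.
Add Ring fpsA : (fps_rt A).

Lemma faddE (f g : fps A) n : fadd f g n = f n + g n. Proof. by []. Qed.

Lemma foppE (f : fps A) n : fopp f n = - f n. Proof. by []. Qed.

Definition tateR (m1 m2 m3 m4 m6 : A) (s : fps A) : fps A :=
  fadd (fmul (fT A) (fmul (fT A) (fT A)))
      (fadd (fscale m1 (fmul (fT A) s))
      (fadd (fscale m2 (fmul (fmul (fT A) (fT A)) s))
      (fadd (fscale m3 (fmul s s))
      (fadd (fscale m4 (fmul (fT A) (fmul s s)))
            (fscale m6 (fmul s (fmul s s))))))).

Lemma tate_uniq (m1 m2 m3 m4 m6 : A) (s s' : fps A) :
  is_tate_s m1 m2 m3 m4 m6 s -> is_tate_s m1 m2 m3 m4 m6 s' -> s = s'.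
Proof.
case=> h0 hs [h0' hs'].
change (s = tateR m1 m2 m3 m4 m6 s) in hs.
change (s' = tateR m1 m2 m3 m4 m6 s') in hs'.
pose t := fT A.
pose K := fadd (fmul (cst m1) t) (fadd (fmul (cst m2) (fmul t t))
  (fadd (fmul (cst m3) (fadd s s')) (fadd (fmul (cst m4) (fmul t (fadd s s')))
  (fmul (cst m6) (fadd (fmul s s) (fadd (fmul s s') (fmul s' s'))))))).
have E : fmul (fsub s s') (fsub (fone A) K) =
   fsub (fsub s (tateR m1 m2 m3 m4 m6 s)) (fsub s' (tateR m1 m2 m3 m4 m6 s')).
  rewrite /tateR -!fmul_cst /K /t; sring.
rewrite -hs -hs' in E.
have E2 : fmul (fsub s s') (fsub (fone A) K) = fzero A by rewrite E; sring.
have K0 : fsub (fone A) K 0%N = 1.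
  rewrite /fsub /K /t !(faddE, foppE, fmul0n) /fone /cst h0 h0' /fT /=.
  by rewrite !(mulr0, mul0r, addr0, oppr0).
have := unit_cancel E2 K0 => D.
have -> : s = fadd (fsub s s') s' by sring.
by rewrite D; sring.
Qed.
End Uniq.


Lemma dvD (f g : fps Vring) : dv (fadd f g) = fadd (dv f) (dv g).
Proof. by apply: functional_extensionality => n; rewrite /dv /fadd derivD. Qed.
Lemma dvM (f g : fps Vring) : dv (fmul f g) = fadd (fmul (dv f) g) (fmul f (dv g)).
Proof.
apply: functional_extensionality => n; rewrite /dv /fadd /fmul raddf_sum -big_split /=.
by apply: eq_bigr => i _; rewrite derivM.
Qed.
Lemma dvS a (f : fps Vring) : dv (fscale a f) = fadd (fscale a^`() f) (fscale a (dv f)).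
Proof. by apply: functional_extensionality => n; rewrite /dv /fadd /fscale derivM. Qed.
Lemma dvT : dv (fT Vring) = fzero Vring.
Proof. by apply: functional_extensionality => n; rewrite /dv /fT /fzero -polyC_natr derivC. Qed.

Lemma atD (f g : fps Vring) : at_v0 (fadd f g) = fadd (at_v0 f) (at_v0 g).
Proof. by apply: functional_extensionality => n; rewrite /at_v0 /fadd hornerD. Qed.
Lemma atM (f g : fps Vring) : at_v0 (fmul f g) = fmul (at_v0 f) (at_v0 g).
Proof.
apply: functional_extensionality => n; rewrite /at_v0 /fmul horner_sum.
by apply: eq_bigr => i _; rewrite hornerM.
Qed.
Lemma atS a (f : fps Vring) : at_v0 (fscale a f) = fscale a.[0] (at_v0 f).
Proof. by apply: functional_extensionality => n; rewrite /at_v0 /fscale hornerM. Qed.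
Lemma atT : at_v0 (fT Vring) = fT Cring.
Proof. by apply: functional_extensionality => n; rewrite /at_v0 /fT -polyC_natr hornerC. Qed.

Lemma cstD (A : comRingType) (a b : A) : cst (a + b) = fadd (cst a) (cst b).
Proof. by apply: functional_extensionality => -[|n] //=; rewrite /fadd /= addr0. Qed.
Lemma cstM (A : comRingType) (a b : A) : cst (a * b) = fmul (cst a) (cst b).
Proof.
rewrite fmul_cst; apply: functional_extensionality => -[|n] //=; by rewrite /fscale /= mulr0.
Qed.
Lemma cst0 (A : comRingType) : cst (0 : A) = fzero A.
Proof. by apply: functional_extensionality => -[|n]. Qed.
Lemma cst1 (A : comRingType) : cst (1 : A) = fone A.
Proof. by []. Qed.

Lemma dmu1 : mu1v^`() = 0. Proof. by rewrite /mu1v deriv0. Qed.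
Lemma dmu2 : mu2v^`() = 1 + 1 + 1.
Proof. rewrite /mu2v /v !derivE /=. ring. Qed.
Lemma dmu3 : mu3v^`() = 0. Proof. by rewrite /mu3v derivC. Qed.
Lemma dmu4 : mu4v^`() = (1 + 1) * mu2v.
Proof. rewrite /mu4v /mu2v /v !derivE /=. ring. Qed.
Lemma dmu6 : mu6v^`() = mu4v.
Proof. rewrite /mu6v /mu4v /v !derivE /=. ring. Qed.

Section Burgers.
Variable A : comRingType.
Add Ring fpsB : (fps_rt A).
Variables (D : fps A -> fps A) (d : A -> A).
Hypothesis DD : forall f g, D (fadd f g) = fadd (D f) (D g).
Hypothesis DM : forall f g, D (fmul f g) = fadd (fmul (D f) g) (fmul f (D g)).
Hypothesis DS : forall a f, D (fscale a f) = fadd (fscale (d a) f) (fscale a (D f)).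
Hypothesis DT : D (fT A) = fzero A.
Variables m2 m3 m4 m6 : A.
Hypotheses (d1 : d 0 = 0) (d2 : d m2 = 1 + 1 + 1) (d3 : d m3 = 0)
  (d4 : d m4 = (1 + 1) * m2) (d6 : d m6 = m4).

Definition two := fadd (fone A) (fone A).
Definition three := fadd two (fone A).
Definition gg (S : fps A) := fadd (fmul (cst m2) (fmul (fT A) (fT A)))
  (fadd (fmul two (fmul (cst m3) S)) (fadd (fmul two (fmul (cst m4) (fmul (fT A) S)))
   (fmul three (fmul (cst m6) (fmul S S))))).
Definition bb (S : fps A) := fadd (fmul three (fmul (fT A) (fT A)))
  (fadd (fmul two (fmul (cst m2) (fmul (fT A) S))) (fmul (cst m4) (fmul S S))).

Lemma burgers S : is_tate_s 0 m2 m3 m4 m6 S -> D S = fmul S (fderiv S).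
Proof.
case=> h0 hS; change (S = tateR 0 m2 m3 m4 m6 S) in hS.
have eX := congr1 D hS; have eY := congr1 (@fderiv A) hS.
rewrite /tateR !(DD, DM, DS, DT) d1 d2 d3 d4 d6 -!fmul_cst !(cstD, cstM) cst0 cst1 in eX.
rewrite /tateR !(fderivD, fderivM, fderivS, fderivT) -!fmul_cst cst0 in eY.
have eX' : D S = fadd (fmul S (bb S)) (fmul (gg S) (D S)).
  by rewrite {1}eX /bb /gg /three /two; sring.
have eY' : fderiv S = fadd (bb S) (fmul (gg S) (fderiv S)).
  by rewrite {1}eY /bb /gg /three /two; sring.
have E : fmul (fsub (D S) (fmul S (fderiv S))) (fsub (fone A) (gg S)) = fzero A.
  have -> : fmul (fsub (D S) (fmul S (fderiv S))) (fsub (fone A) (gg S)) =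
    fsub (fsub (D S) (fadd (fmul S (bb S)) (fmul (gg S) (D S))))
         (fmul S (fsub (fderiv S) (fadd (bb S) (fmul (gg S) (fderiv S))))) by sring.
  by rewrite -eX' -eY'; sring.
have K0 : fsub (fone A) (gg S) 0%N = 1.
  rewrite /fsub /gg /two /three !(faddE, foppE, fmul0n) /fone /cst h0 /fT /=.
  by rewrite !(mulr0, mul0r, addr0, oppr0).
have Z := unit_cancel E K0.
have -> : D S = fadd (fsub (D S) (fmul S (fderiv S))) (fmul S (fderiv S)) by sring.
by rewrite Z; sring.
Qed.
End Burgers.

Lemma ev1 : mu1v.[0] = 0. Proof. by rewrite /mu1v horner0. Qed.
Lemma ev2 : mu2v.[0] = c2. Proof. by rewrite /mu2v /v !hornerE /=; ring. Qed.
Lemma ev3 : mu3v.[0] = c3. Proof. by rewrite /mu3v !hornerE. Qed.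
Lemma ev4 : mu4v.[0] = c4. Proof. by rewrite /mu4v /v !hornerE /=; ring. Qed.
Lemma ev6 : mu6v.[0] = c6. Proof. by rewrite /mu6v /v !hornerE /=; ring. Qed.

Section TMap.
Variables (A B : comRingType) (F : fps A -> fps B) (ev : A -> B).
Hypothesis FD : forall f g, F (fadd f g) = fadd (F f) (F g).
Hypothesis FM : forall f g, F (fmul f g) = fmul (F f) (F g).
Hypothesis FS : forall a f, F (fscale a f) = fscale (ev a) (F f).
Hypothesis FT : F (fT A) = fT B.
Lemma tate_map m1 m2 m3 m4 m6 s :
  F (tateR m1 m2 m3 m4 m6 s) = tateR (ev m1) (ev m2) (ev m3) (ev m4) (ev m6) (F s).
Proof. by rewrite /tateR !(FD, FM, FS) FT. Qed.
End TMap.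

Lemma tateR_congr (A : comRingType) (s : fps A) (a1 a2 a3 a4 a6 b1 b2 b3 b4 b6 : A) :
  a1 = b1 -> a2 = b2 -> a3 = b3 -> a4 = b4 -> a6 = b6 ->
  tateR a1 a2 a3 a4 a6 s = tateR b1 b2 b3 b4 b6 s.
Proof. by move=> -> -> -> -> ->. Qed.

Theorem mainTheorem6 (S : fps Vring) (s0 : fps Cring) :
  is_tate_s mu1v mu2v mu3v mu4v mu6v S ->
  is_tate_s 0 c2 c3 c4 c6 s0 ->
  dv S = fmul S (fderiv S) /\ at_v0 S = s0.
Proof.
move=> hS hs0; split.
  apply: (burgers dvD dvM dvS dvT (d:=deriv) (m2:=mu2v) (m3:=mu3v) (m4:=mu4v) (m6:=mu6v)).
  - exact: deriv0.
  - exact: dmu2.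
  - exact: dmu3.
  - exact: dmu4.
  - exact: dmu6.
  - exact: hS.
apply: (tate_uniq _ hs0).
case: hS => h0 hS; split; first by rewrite /at_v0 h0 horner0.
change (S = tateR mu1v mu2v mu3v mu4v mu6v S) in hS.
have eZ := congr1 at_v0 hS.
rewrite (tate_map atD atM atS atT) in eZ.
have E := tateR_congr (at_v0 S) ev1 ev2 ev3 ev4 ev6.
exact: (etrans eZ E).
Qed.
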